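(* Let $N = n+1 \geq 4$ be even and let $\boldsymbol{\lambda} = (\lambda_1,\dots,\lambda_N) \in \Lambda_N$. Let $V_N = \{\mathbf{v}_0,\dots,\mathbf{v}_N\} \subset \mathbb{R}^n$ with $\mathbf{v}_0 = \mathbf{0}$ and $\mathbf{v}_i = \lambda_i(\mathbf{e}_{i-1} - \mathbf{e}_i)$ for $1 \le i \le N$, and let $G^{\mathbf{0}}_{\boldsymbol{\lambda}} = \operatorname{conv} V_N$. Then $G^{\mathbf{0}}_{\boldsymbol{\lambda}}$ has exactly two triangulations (with vertices among $V_N$), namely \[ \Delta_+(G^{\mathbf{0}}_{\boldsymbol{\lambda}}) = \{\operatorname{conv}(V_N \setminus \{\mathbf{v}_i\}) \mid 1\le i\le N,\ \lambda_i = \lambda_1\} \] and \[ \Delta_-(G^{\mathbf{0}}_{\boldsymbol{\lambda}}) = \{\operatorname{conv}(V_N \setminus \{\mathbf{v}_i\}) \mid 1\le i\le N,\ \lambda_i = -\lambda_1\}. \] Moreover, both of these triangulations are regular.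
   Context: $\mathbf{e}_1,\dots,\mathbf{e}_n$ is the standard basis of $\mathbb{R}^n$, and by convention $\mathbf{e}_0 = \mathbf{e}_{n+1} = \mathbf{e}_N = \mathbf{0}$. For even $N$, $\Lambda_N = \{(\lambda_1,\dots,\lambda_N) \in \{-1,1\}^N \mid \sum_{i=1}^N \lambda_i = 0\}$. A triangulation of a polytope is a subdivision into simplices; it is regular if it is the projection to $\mathbb{R}^n$ of the lower facets (facets whose inner normal has positive last coordinate) of the lifted polytope $\operatorname{conv}\{(\mathbf{v}, h(\mathbf{v}))\}$ for some height function $h$ on the vertices. *)

(* Defs.v *)
From HB Require Import structures.
From mathcomp Require Import all_boot all_order all_algebra.
From mathcomp Require Import reals.
Set Implicit Arguments. Unset Strict Implicit. Unset Printing Implicit Defensive.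
Import Order.TTheory GRing.Theory Num.Theory.
Local Open Scope ring_scope.

Section Geometry.
Variable R : realType.

Definition dotv (k : nat) (a b : 'rV[R]_k) : R := \sum_(j < k) a 0 j * b 0 j.

Definition in_conv (m k : nat) (p : 'I_m -> 'rV[R]_k) (S : {set 'I_m}) (x : 'rV[R]_k) : Prop :=
  exists w : 'I_m -> R,
    [/\ forall i, 0 <= w i, forall i, i \notin S -> w i = 0,
        \sum_i w i = 1 & x = \sum_i w i *: p i].

Definition aff_indep (m k : nat) (p : 'I_m -> 'rV[R]_k) (S : {set 'I_m}) : Prop :=
  forall w : 'I_m -> R, (forall i, i \notin S -> w i = 0) ->
    \sum_i w i = 0 -> \sum_i w i *: p i = 0 -> forall i, w i = 0.

Definition same_hull (m k : nat) (p : 'I_m -> 'rV[R]_k) (S S' : {set 'I_m}) : Prop :=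
  forall x, in_conv p S x <-> in_conv p S' x.

(* A triangulation of conv(p) in R^n with vertices among the p i : a collection T of
   cells (index sets, standing for the simplices conv(p(S))) such that every cell is an
   n-simplex, the cells cover conv(p), and any two cells intersect in the common face
   spanned by their common vertices. *)
Definition is_triangulation (m n : nat) (p : 'I_m -> 'rV[R]_n) (T : {set {set 'I_m}}) : Prop :=
  [/\ forall S, S \in T -> #|S| = n.+1 /\ aff_indep p S,
      forall x, in_conv p setT x <-> exists2 S, S \in T & in_conv p S x &
      forall S S', S \in T -> S' \in T ->
        forall x, (in_conv p S x /\ in_conv p S' x) <-> in_conv p (S :&: S') x].

Definition lift (m n : nat) (p : 'I_m -> 'rV[R]_n) (h : 'I_m -> R) (i : 'I_m) : 'rV[R]_(n + 1) :=
  row_mx (p i) (\row_(j < 1) h i).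

(* L is the vertex-index set of a lower facet of the lifted polytope
   conv{(p i, h i)} : the face cut out by a supporting hyperplane whose inner normal
   (c, c0) has positive last coordinate c0, which is a proper face of dimension n
   (i.e. a facet of a polytope in R^(n+1)). *)
Definition lower_facet (m n : nat) (p : 'I_m -> 'rV[R]_n) (h : 'I_m -> R) (L : {set 'I_m}) : Prop :=
  exists (c : 'rV[R]_n) (c0 d : R),
    [/\ 0 < c0,
        forall i, d <= dotv c (p i) + c0 * h i,
        forall i, i \in L <-> dotv c (p i) + c0 * h i = d,
        exists i, i \notin L &
        exists2 S' : {set 'I_m}, (S' \subset L) && (#|S'| == n.+1) & aff_indep (lift p h) S'].

Definition regular_triangulation (m n : nat) (p : 'I_m -> 'rV[R]_n) (T : {set {set 'I_m}}) : Prop :=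
  is_triangulation p T /\
  exists h : 'I_m -> R,
    (forall S, S \in T -> exists L, lower_facet p h L /\ same_hull p S L) /\
    (forall L, lower_facet p h L -> exists2 S, S \in T & same_hull p S L).

(* e_k for k = 1..n is the k-th standard basis vector; e_0 = e_(n+1) = 0 *)
Definition e (n : nat) (k : nat) : 'rV[R]_n := \row_(j < n) (k == j.+1)%:R.

(* Lambda_N, with lam (j : 'I_N) standing for lambda_(j+1) *)
Definition in_Lambda (N : nat) (lam : 'I_N -> R) : Prop :=
  (forall i, lam i = 1 \/ lam i = -1) /\ \sum_i lam i = 0.

(* lambda_k for 1 <= k <= N = n+1 (index k : 'I_(n+2)) *)
Definition lamk (n : nat) (lam : 'I_n.+1 -> R) (k : 'I_n.+2) : R := lam (inord k.-1).

Definition VN (n : nat) (lam : 'I_n.+1 -> R) (k : 'I_n.+2) : 'rV[R]_n :=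
  if (k : nat) == 0%N then 0 else lamk lam k *: (e n k.-1 - e n k).

Definition Delta_plus (n : nat) (lam : 'I_n.+1 -> R) : {set {set 'I_n.+2}} :=
  [set ~: [set k] | k : 'I_n.+2 & ((0 < k)%N && (lamk lam k == lam ord0))].
Definition Delta_minus (n : nat) (lam : 'I_n.+1 -> R) : {set {set 'I_n.+2}} :=
  [set ~: [set k] | k : 'I_n.+2 & ((0 < k)%N && (lamk lam k == - lam ord0))].

End Geometry.

(* Main.v *)
Require Import Defs.
From HB Require Import structures.
From mathcomp Require Import all_boot all_order all_algebra.
From mathcomp Require Import reals zify ring lra.
Set Implicit Arguments. Unset Strict Implicit. Unset Printing Implicit Defensive.
Import Order.TTheory GRing.Theory Num.Theory.
Local Open Scope ring_scope.

Lemma VN_coord (R : realType) n (lam : 'I_n.+1 -> R) (k : 'I_n.+2) (j : 'I_n) :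
  VN lam k 0 j = lamk lam k * ((k == inord j.+2 :> 'I_n.+2)%:R - (k == inord j.+1 :> 'I_n.+2)%:R).
Proof.
have h1 : (j.+1 < n.+2)%N by have := ltn_ord j; lia.
have h2 : (j.+2 < n.+2)%N by have := ltn_ord j; lia.
rewrite /VN -!val_eqE /= !inordK //; case: k => [[|k] hk] /=.
  by rewrite mxE subrr mulr0.
by rewrite !mxE.
Qed.

Definition nu (R : realType) (n : nat) (lam : 'I_n.+1 -> R) (k : 'I_n.+2) : R :=
  if (k : nat) == 0%N then 0 else lamk lam k * lam ord0.

Definition pm1 (R : realType) (n : nat) (lam : 'I_n.+1 -> R) :=
  forall i, lam i = 1 \/ lam i = -1.

Lemma sq1 (R : realType) (x : R) : x = 1 \/ x = -1 -> x * x = 1.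
Proof. by case=> ->; rewrite ?mulr1 ?mulrNN ?mulr1. Qed.

Lemma sum_delta (R : realType) m (F : 'I_m -> R) (J : 'I_m) :
  \sum_k F k * (k == J)%:R = F J.
Proof.
rewrite (bigD1 J) //= eqxx mulr1 big1 ?addr0 // => k /negbTE ->; by rewrite mulr0.
Qed.

Lemma sum_coord (R : realType) n (lam : 'I_n.+1 -> R) (w : 'I_n.+2 -> R) (j : 'I_n) :
  (\sum_k w k *: VN lam k) 0 j =
  w (inord j.+2) * lamk lam (inord j.+2) - w (inord j.+1) * lamk lam (inord j.+1).
Proof.
rewrite summxE.
under eq_bigr do rewrite mxE VN_coord mulrA mulrBr.
by rewrite sumrB !sum_delta.
Qed.

Lemma lamk_lift (R : realType) n (lam : 'I_n.+1 -> R) (i : 'I_n.+1) :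
  lamk lam (lift ord0 i) = lam i.
Proof. by rewrite /lamk /= inord_val. Qed.

Lemma nu_pos (R : realType) n (lam : 'I_n.+1 -> R) (k : 'I_n.+2) :
  (0 < k)%N -> nu lam k = lamk lam k * lam ord0.
Proof. by rewrite /nu; case: (k : nat). Qed.

Lemma nu0 (R : realType) n (lam : 'I_n.+1 -> R) : nu lam ord0 = 0.
Proof. by []. Qed.

Lemma nu_lift (R : realType) n (lam : 'I_n.+1 -> R) (i : 'I_n.+1) :
  nu lam (lift ord0 i) = lam i * lam ord0.
Proof. by rewrite nu_pos // lamk_lift. Qed.

Lemma lamk_pm (R : realType) n (lam : 'I_n.+1 -> R) k : pm1 lam ->
  lamk lam k = 1 \/ lamk lam k = -1.
Proof. by move=> h; apply: h. Qed.

Lemma sum_nu (R : realType) n (lam : 'I_n.+1 -> R) : in_Lambda lam ->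
  \sum_k nu lam k = 0.
Proof.
case=> _ hs; rewrite big_ord_recl nu0 add0r.
under eq_bigr do rewrite nu_lift.
by rewrite -mulr_suml hs mul0r.
Qed.

Lemma sum_nu_p (R : realType) n (lam : 'I_n.+1 -> R) : in_Lambda lam ->
  \sum_k nu lam k *: VN lam k = 0.
Proof.
case=> hpm _; apply/rowP => j; rewrite sum_coord !mxE.
rewrite !nu_pos ?inordK //; try (have := ltn_ord j; lia).
rewrite -!mulrA ![lam ord0 * _]mulrC !mulrA !sq1 ?subrr //; apply: lamk_pm; exact: hpm.
Qed.

Lemma inord1_lamk (R : realType) n (lam : 'I_n.+1 -> R) :
  lamk lam (inord 1 : 'I_n.+2) = lam ord0.
Proof. rewrite /lamk inordK //; congr lam; apply: val_inj; rewrite /= inordK //. Qed.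

Lemma dep (R : realType) n (lam : 'I_n.+1 -> R) (w : 'I_n.+2 -> R) : in_Lambda lam ->
  \sum_k w k = 0 -> \sum_k w k *: VN lam k = 0 -> forall k, w k = w (inord 1) * nu lam k.
Proof.
move=> hL hs hv.
have hpm : pm1 lam by case: hL.
have hc : forall j : 'I_n, w (inord j.+2) * lamk lam (inord j.+2) = w (inord j.+1) * lamk lam (inord j.+1).
  by move=> j; apply/eqP; rewrite -subr_eq0 -sum_coord hv mxE.
have hi : forall i, (i < n.+1)%N -> w (inord i.+1) * lamk lam (inord i.+1) = w (inord 1) * lamk lam (inord 1).
  elim=> [//|i IH] hi; rewrite -IH; last by lia.
  have hin : (i < n)%N by lia.
  exact: (hc (Ordinal hin)).
have hpos : forall k : 'I_n.+2, (0 < k)%N -> w k = w (inord 1) * nu lam k.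
  move=> k hk; rewrite nu_pos //.
  have -> : k = inord (k.-1).+1 by apply: val_inj; rewrite /= prednK // inordK // prednK.
  have h1 := hi k.-1.
  have hk1 : (k.-1 < n.+1)%N by have := ltn_ord k; lia.
  have := h1 hk1; rewrite inord1_lamk => h2.
  have hsq := sq1 (lamk_pm (inord (k.-1).+1) hpm).
  by rewrite -[w _]mulr1 -hsq mulrA h2 -!mulrA [lam ord0 * _]mulrC.
have h0 : w ord0 = 0.
  move: hs; rewrite big_ord_recl.
  under eq_bigr do rewrite hpos //.
  rewrite -mulr_sumr.
  have := sum_nu hL; rewrite big_ord_recl nu0 add0r => ->.
  by rewrite mulr0 addr0.
move=> k; case: (posnP k) => hk; last exact: hpos.
have -> : k = ord0 by apply: val_inj.
by rewrite h0 nu0 mulr0.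
Qed.

Lemma exists_min (R : realType) (I : finType) (P : pred I) (F : I -> R) i0 :
  P i0 -> exists2 k, P k & forall j, P j -> F k <= F j.
Proof.
move=> Pi0; case: (@arg_minP _ R I i0 P F Pi0) => k Pk hk.
by exists k.
Qed.

Lemma twoRep (R : realType) n (lam : 'I_n.+1 -> R) (w w' : 'I_n.+2 -> R) : in_Lambda lam ->
  \sum_k w k = \sum_k w' k -> \sum_k w k *: VN lam k = \sum_k w' k *: VN lam k ->
  exists t, forall k, w' k = w k + t * nu lam k.
Proof.
move=> hL hs hv.
have := @dep R n lam (fun k => w' k - w k) hL.
rewrite sumrB hs subrr => /(_ erefl).
under eq_bigr do rewrite scalerBl.
rewrite sumrB hv subrr => /(_ erefl) h.
exists (w' (inord 1) - w (inord 1)) => k; rewrite -h.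
by rewrite addrC subrK.
Qed.

Lemma shift_sum (R : realType) n (lam : 'I_n.+1 -> R) (u : 'I_n.+2 -> R) t : in_Lambda lam ->
  \sum_k (u k + t * nu lam k) = \sum_k u k /\
  \sum_k (u k + t * nu lam k) *: VN lam k = \sum_k u k *: VN lam k.
Proof.
move=> hL; split.
  by rewrite big_split /= -mulr_sumr sum_nu // mulr0 addr0.
under eq_bigr do rewrite scalerDl -scalerA.
by rewrite big_split /= -scaler_sumr sum_nu_p // scaler0 addr0.
Qed.

Lemma nu_cases (R : realType) n (lam : 'I_n.+1 -> R) (k : 'I_n.+2) : pm1 lam ->
  (0 < k)%N -> nu lam k = 1 \/ nu lam k = -1.
Proof.
move=> hpm hk; rewrite nu_pos //.
case: (lamk_pm k hpm) => ->; case: (hpm ord0) => ->; rewrite ?mulr1 ?mulrN1 ?opprK; by [left|right].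
Qed.

Lemma nu_sq (R : realType) n (lam : 'I_n.+1 -> R) (k : 'I_n.+2) : pm1 lam ->
  (0 < k)%N -> nu lam k * nu lam k = 1.
Proof. by move=> hpm hk; apply: sq1; apply: nu_cases. Qed.

Lemma nu_eq0 (R : realType) n (lam : 'I_n.+1 -> R) (k : 'I_n.+2) : pm1 lam ->
  (nu lam k == 0) = (k == ord0).
Proof.
move=> hpm; case: (posnP k) => hk.
  have -> : k = ord0 by apply: val_inj.
  by rewrite nu0 !eqxx.
have -> : (k == ord0) = false by apply/negbTE; rewrite -val_eqE /= -lt0n.
by case: (nu_cases hpm hk) => ->; rewrite ?oner_eq0 ?oppr_eq0 ?oner_eq0.
Qed.

Lemma conv_mono (R : realType) m k (p : 'I_m -> 'rV[R]_k) (S S' : {set 'I_m}) x :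
  S \subset S' -> in_conv p S x -> in_conv p S' x.
Proof.
move=> /subsetP hS [w [h1 h2 h3 h4]]; exists w; split => // i hi.
by apply: h2; apply/negP => /hS; apply/negP.
Qed.

Lemma cell_indep (R : realType) n (lam : 'I_n.+1 -> R) (k : 'I_n.+2) : in_Lambda lam ->
  k != ord0 -> aff_indep (VN lam) (~: [set k]).
Proof.
move=> hL hk w hw hs hv.
have hd := dep hL hs hv.
have : w k = 0 by apply: hw; rewrite in_setC in_set1 eqxx.
rewrite hd => /eqP; rewrite mulf_eq0 nu_eq0; last by case: hL.
rewrite (negbTE hk) orbF => /eqP h0 i.
by rewrite hd h0 mul0r.
Qed.

Lemma cell0_dep (R : realType) n (lam : 'I_n.+1 -> R) : in_Lambda lam ->
  ~ aff_indep (VN lam) (~: [set ord0]).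
Proof.
move=> hL hI.
have hs : forall i : 'I_n.+2, i \notin ~: [set ord0] -> nu lam i = 0.
  by move=> i; rewrite in_setC in_set1 negbK => /eqP ->; exact: nu0.
have := hI (nu lam) hs (sum_nu hL) (sum_nu_p hL) (inord 1).
rewrite nu_pos ?inordK // inord1_lamk sq1; last by case: hL.
by move/eqP; rewrite oner_eq0.
Qed.

Definition DeltaS (R : realType) n (lam : 'I_n.+1 -> R) (s : R) : {set {set 'I_n.+2}} :=
  [set ~: [set k] | k : 'I_n.+2 & nu lam k == s].

Lemma mem_DeltaS (R : realType) n (lam : 'I_n.+1 -> R) s S :
  S \in DeltaS lam s <-> exists k, S = ~: [set k] /\ nu lam k = s.
Proof.
split.
  by case/imsetP => k; rewrite inE => /eqP hk ->; exists k.
by case=> k [-> hk]; apply/imsetP; exists k; rewrite ?inE ?hk.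
Qed.

Lemma sgn_cases (R : realType) n (lam : 'I_n.+1 -> R) (s : R) j : pm1 lam ->
  (s = 1 \/ s = -1) -> nu lam j = 0 \/ nu lam j = s \/ nu lam j = - s.
Proof.
move=> hpm hs; case: (posnP j) => hj.
  by left; have -> : j = ord0 by apply: val_inj.
by right; case: (nu_cases hpm hj) => ->; case: hs => ->; rewrite ?opprK; by [left|right].
Qed.

Lemma s_sq (R : realType) (s : R) : (s = 1 \/ s = -1) -> s * s = 1.
Proof. exact: sq1. Qed.

Lemma s_neq0 (R : realType) (s : R) : (s = 1 \/ s = -1) -> s != 0.
Proof. by case=> ->; rewrite ?oppr_eq0 oner_eq0. Qed.

Lemma tri_DeltaS (R : realType) n (lam : 'I_n.+1 -> R) (s : R) : in_Lambda lam ->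
  (s = 1 \/ s = -1) -> (exists a, nu lam a = s) ->
  is_triangulation (VN lam) (DeltaS lam s).
Proof.
move=> hL hs [a ha].
have hpm : pm1 lam by case: hL.
have hss := s_sq hs.
have hs0 := s_neq0 hs.
have nz : forall k, nu lam k = s -> k != ord0.
  by move=> k hk; rewrite -(nu_eq0 k hpm) hk.
split.
- move=> S /mem_DeltaS [k [-> hk]]; split.
    by rewrite cardsC1 card_ord.
  by apply: cell_indep => //; apply: nz.
- move=> x; split; last first.
    by case=> S _; apply: conv_mono; apply: subsetT.
  case=> u [u0 _ u1 ux].
  have [k hk hmin] := @exists_min R _ (fun j => nu lam j == s) u a (introT eqP ha).
  move/eqP: hk => hk.
  exists (~: [set k]); first by apply/mem_DeltaS; exists k.
  have [hsum hvec] := shift_sum u (- (s * u k)) hL.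
  exists (fun j => u j + - (s * u k) * nu lam j); split => //.
  + move=> j; case: (sgn_cases j hpm hs) => [->|[hj|hj]].
    * by rewrite mulr0 addr0.
    * rewrite hj mulNr -mulrA [u k * s]mulrC mulrA hss mul1r subr_ge0.
      by apply: hmin; rewrite hj.
    * rewrite hj mulrN mulNr opprK -mulrA [u k * s]mulrC mulrA hss mul1r.
      by apply: addr_ge0.
  + move=> j; rewrite in_setC in_set1 negbK => /eqP ->.
    by rewrite hk mulNr -mulrA [u k * s]mulrC mulrA hss mul1r subrr.
  + by rewrite hsum.
  + by rewrite hvec.
- move=> S S' /mem_DeltaS [b [-> hb]] /mem_DeltaS [b' [-> hb']] x; split; last first.
    by move=> h; split; apply: conv_mono h; rewrite ?subsetIl ?subsetIr.
  case=> [[w [w0 wS w1 wx]] [w' [w'0 w'S w'1 w'x]]].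
  have [t ht] := twoRep hL (etrans w1 (esym w'1)) (etrans (esym wx) w'x).
  have hb0 : w b = 0 by apply: wS; rewrite in_setC in_set1 negbK.
  have hb'0 : w' b' = 0 by apply: w'S; rewrite in_setC in_set1 negbK.
  have e1 : 0 <= t * s by have := w'0 b; rewrite ht hb0 add0r hb.
  have e2 : 0 <= - (t * s) by have := w0 b'; have := ht b'; rewrite hb'0 hb' => /eqP; rewrite eq_sym addr_eq0 => /eqP ->.
  have ht0 : t = 0.
    have : t * s = 0 by apply/eqP; rewrite eq_le e1 andbT -oppr_ge0.
    by move/eqP; rewrite mulf_eq0 (negbTE hs0) orbF => /eqP.
  exists w; split => // i; rewrite in_setI negb_and => /orP [hi|hi].
    exact: wS.
  by have := ht i; rewrite ht0 mul0r addr0 => <-; apply: w'S.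
Qed.

Lemma cell_form (R : realType) n (lam : 'I_n.+1 -> R) (T : {set {set 'I_n.+2}}) S :
  in_Lambda lam -> is_triangulation (VN lam) T -> S \in T ->
  exists k, S = ~: [set k] /\ (nu lam k = 1 \/ nu lam k = -1).
Proof.
move=> hL [hT _ _] hS; have [hc hi] := hT S hS.
have : #|~: S| == 1%N.
  by have := cardsC S; rewrite hc card_ord; lia.
case/cards1P => k hk.
have eS : S = ~: [set k] by rewrite -hk setCK.
exists k; split => //; apply: nu_cases; first by case: hL.
case: (posnP k) => // hk0; exfalso; apply: (cell0_dep hL).
have -> : (ord0 : 'I_n.+2) = k by apply: val_inj.
by rewrite -eS.
Qed.

Lemma m1neq1 (R : realType) : (-1 == 1 :> R) = false.
Proof. apply/negbTE/eqP; lra. Qed.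

Lemma sum_ge_term (R : realType) m (F : 'I_m -> R) a :
  (forall j, 0 <= F j) -> F a <= \sum_j F j.
Proof.
move=> h; rewrite (bigD1 a) //= lerDl; apply: sumr_ge0 => j _; exact: h.
Qed.

Lemma no_mix (R : realType) n (lam : 'I_n.+1 -> R) (T : {set {set 'I_n.+2}}) a b :
  in_Lambda lam -> is_triangulation (VN lam) T -> ~: [set a] \in T -> ~: [set b] \in T ->
  nu lam a = 1 -> nu lam b = -1 -> False.
Proof.
move=> hL hT ha hb na nb.
have hpm : pm1 lam by case: hL.
set c := fun j => (nu lam j == 1)%:R : R.
have c0 : forall j, 0 <= c j by move=> j; rewrite /c ler0n.
have cpos : 0 < \sum_j c j.
  by apply: (lt_le_trans _ (sum_ge_term a c0)); rewrite /c na eqxx ltr01.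
set al := (\sum_j c j)^-1.
have alpos : 0 < al by rewrite invr_gt0.
set u := fun j => al * c j.
have u1 : \sum_j u j = 1 by rewrite -mulr_sumr mulVf // gt_eqF.
have [_ hvec] := shift_sum u (- al) hL.
have [hsum _] := shift_sum u (- al) hL.
set x := \sum_j u j *: VN lam j.
case: hT => _ _ hI.
have := hI _ _ ha hb x; case => hto _.
case: hto.
  split.
    exists (fun j => u j + - al * nu lam j); split => //.
    + move=> j; rewrite /u /c; case: (sgn_cases j hpm (or_introl erefl)) => [->|[->|->]].
      * by rewrite mulr0 addr0 mulr_ge0 ?ler0n // ltW.
      * by rewrite eqxx !mulr1 subrr.
      * by rewrite mulrN mulNr opprK mulr1 m1neq1 mulr0 add0r ltW.
    + move=> j; rewrite in_setC in_set1 negbK => /eqP ->.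
      by rewrite /u /c na eqxx !mulr1 subrr.
    + by rewrite hsum.
  exists u; split => //.
  + by move=> j; rewrite /u mulr_ge0 // ltW.
  + move=> j; rewrite in_setC in_set1 negbK => /eqP ->.
    by rewrite /u /c nb m1neq1 mulr0.
move=> w [w0 wS w1 wx].
have [t ht] := twoRep hL (etrans u1 (esym w1)) wx.
have : w b = 0 by apply: wS; rewrite in_setI !in_setC !in_set1 eqxx andbF.
rewrite ht nb /u /c nb m1neq1.
rewrite mulr0 add0r mulrN1 => /eqP; rewrite oppr_eq0 => /eqP t0.
have : w a = 0 by apply: wS; rewrite in_setI !in_setC !in_set1 eqxx.
rewrite ht t0 mul0r addr0 /u /c na eqxx mulr1 => al0.
by move: alpos; rewrite al0 ltxx.
Qed.

Lemma complete (R : realType) n (lam : 'I_n.+1 -> R) (T : {set {set 'I_n.+2}}) (s : R) :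
  in_Lambda lam -> (s = 1 \/ s = -1) -> is_triangulation (VN lam) T ->
  (forall S, S \in T -> exists k, S = ~: [set k] /\ nu lam k = s) ->
  T = DeltaS lam s.
Proof.
move=> hL hs hT hall.
have hpm : pm1 lam by case: hL.
have hss := s_sq hs.
apply/eqP; rewrite eqEsubset; apply/andP; split; apply/subsetP => S.
  by move/hall => hk; apply/mem_DeltaS.
case/mem_DeltaS => a [-> ha].
case: (boolP (~: [set a] \in T)) => // hnot; exfalso.
set c := fun j => (nu lam j == s)%:R * 2 - (j == a)%:R : R.
have c0 : forall j, 0 <= c j.
  move=> j; rewrite /c; case: (boolP (j == a)) => [/eqP ->|_].
    by rewrite ha !eqxx /=; lra.
  by rewrite subr0 mulr_ge0 ?ler0n //; lra.
have ca : c a = 1 by rewrite /c ha !eqxx /=; lra.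
have cpos : 0 < \sum_j c j.
  by apply: (lt_le_trans _ (sum_ge_term a c0)); rewrite ca ltr01.
set be := (\sum_j c j)^-1.
have bepos : 0 < be by rewrite invr_gt0.
set u := fun j => be * c j.
have u1 : \sum_j u j = 1 by rewrite -mulr_sumr mulVf // gt_eqF.
set x := \sum_j u j *: VN lam j.
case: hT => _ hcov _.
have : in_conv (VN lam) setT x.
  exists u; split => //.
    by move=> j; rewrite /u; apply: mulr_ge0 => //; apply: ltW.
  by move=> j; rewrite inE.
case/hcov => S' /[dup] hS' /hall [k [eS hk]].
have hka : k != a by apply: contraNneq hnot => <-; rewrite -eS.
rewrite eS => -[w [w0 wS w1 wx]].
have [t ht] := twoRep hL (etrans u1 (esym w1)) wx.
have : w k = 0 by apply: wS; rewrite in_setC in_set1 negbK.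
rewrite ht hk /u /c hk eqxx (negbTE hka) subr0 => e1.
have := w0 a; rewrite ht ha /u /c ha !eqxx.
rewrite /= in e1 *; move=> h; nra.
Qed.

Lemma exists_nu (R : realType) n (lam : 'I_n.+1 -> R) (s : R) : in_Lambda lam ->
  (s = 1 \/ s = -1) -> exists a, nu lam a = s.
Proof.
move=> hL hs; have hpm : pm1 lam by case: hL.
have n1 : nu lam (inord 1) = 1.
  by rewrite nu_pos ?inordK // inord1_lamk sq1.
case: hs => ->; first by exists (inord 1).
case: (pickP (fun j => nu lam j == -1)) => [j /eqP hj|hn]; first by exists j.
have hge : forall j, 0 <= nu lam j.
  move=> j; case: (sgn_cases j hpm (or_introl erefl)) => [->|[->|h]] //.
  by have := hn j; rewrite h eqxx.
have := sum_ge_term (inord 1) hge; rewrite sum_nu // n1; lra.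
Qed.

Lemma classify (R : realType) n (lam : 'I_n.+1 -> R) (T : {set {set 'I_n.+2}}) :
  in_Lambda lam ->
  (is_triangulation (VN lam) T <-> T = DeltaS lam 1 \/ T = DeltaS lam (-1)).
Proof.
move=> hL; split; last first.
  by case=> ->; apply: tri_DeltaS => //; try apply: exists_nu => //; by [left|right].
move=> hT.
case: (boolP [exists a, (~: [set a] \in T) && (nu lam a == 1)]).
  case/existsP => a /andP [ha /eqP na]; left.
  apply: complete => //; first by left.
  move=> S hS; have [k [eS [hk|hk]]] := cell_form hL hT hS; first by exists k.
  by exfalso; apply: (no_mix hL hT ha _ na hk); rewrite -eS.
move=> hno; right; apply: complete => //; first by right.
move=> S hS; have [k [eS [hk|hk]]] := cell_form hL hT hS; last by exists k.
by exfalso; move/negP: hno; apply; apply/existsP; exists k; rewrite -eS hS hk eqxx.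
Qed.

Lemma p1neqm1 (R : realType) : (1 == -1 :> R) = false.
Proof. by rewrite eq_sym m1neq1. Qed.

Lemma Delta_plus_eq (R : realType) n (lam : 'I_n.+1 -> R) : in_Lambda lam ->
  Delta_plus lam = DeltaS lam 1.
Proof.
move=> hL; have hpm : pm1 lam by case: hL.
have E : forall k : 'I_n.+2, ((0 < k)%N && (lamk lam k == lam ord0)) = (nu lam k == 1).
  move=> k; case: (posnP k) => hk.
    by rewrite /nu hk /= eq_sym oner_eq0.
  rewrite nu_pos //=.
  by case: (lamk_pm k hpm) => ->; case: (hpm ord0) => ->;
    rewrite ?mulr1 ?mulrN1 ?opprK ?eqxx ?m1neq1 ?p1neqm1 ?mulrNN ?mulr1.
apply/setP => S; apply/imsetP/imsetP; case=> k hk ->; exists k => //;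
  by move: hk; rewrite !inE E.
Qed.

Lemma Delta_minus_eq (R : realType) n (lam : 'I_n.+1 -> R) : in_Lambda lam ->
  Delta_minus lam = DeltaS lam (-1).
Proof.
move=> hL; have hpm : pm1 lam by case: hL.
have E : forall k : 'I_n.+2, ((0 < k)%N && (lamk lam k == - lam ord0)) = (nu lam k == -1).
  move=> k; case: (posnP k) => hk.
    by rewrite /nu hk /= eq_sym oppr_eq0 oner_eq0.
  rewrite nu_pos //=.
  by case: (lamk_pm k hpm) => ->; case: (hpm ord0) => ->;
    rewrite ?mulr1 ?mulrN1 ?opprK ?eqxx ?m1neq1 ?p1neqm1 ?mulrNN ?mulr1.
apply/setP => S; apply/imsetP/imsetP; case=> k hk ->; exists k => //;
  by move: hk; rewrite !inE E.
Qed.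

Lemma Delta_neq (R : realType) n (lam : 'I_n.+1 -> R) : in_Lambda lam ->
  DeltaS lam 1 <> DeltaS lam (-1).
Proof.
move=> hL heq; have hpm : pm1 lam by case: hL.
have n1 : nu lam (inord 1) = 1 by rewrite nu_pos ?inordK // inord1_lamk sq1.
have : ~: [set (inord 1 : 'I_n.+2)] \in DeltaS lam 1 by apply/mem_DeltaS; exists (inord 1).
rewrite heq => /mem_DeltaS [k [ek hk]].
have : k = inord 1 by apply/set1_inj/setC_inj.
by move=> ekk; move: hk; rewrite ekk n1 => /eqP; rewrite p1neqm1.
Qed.

Lemma dotv_sum_nu (R : realType) n (lam : 'I_n.+1 -> R) (c : 'rV[R]_n) : in_Lambda lam ->
  \sum_j nu lam j * dotv c (VN lam j) = 0.
Proof.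
move=> hL; rewrite /dotv.
under eq_bigr do rewrite mulr_sumr.
rewrite exchange_big /=; apply: big1 => i _.
under eq_bigr do rewrite mulrCA.
rewrite -mulr_sumr.
have := congr1 (fun M : 'rV[R]_n => M 0 i) (sum_nu_p hL).
rewrite summxE mxE /=.
under eq_bigr do rewrite mxE.
by move=> ->; rewrite mulr0.
Qed.

Lemma sum_nu_sq (R : realType) n (lam : 'I_n.+1 -> R) : in_Lambda lam ->
  \sum_j nu lam j * nu lam j = (n.+1)%:R.
Proof.
move=> hL; have hpm : pm1 lam by case: hL.
rewrite big_ord_recl nu0 mul0r add0r.
under eq_bigr do rewrite nu_sq //.
by rewrite sumr_const card_ord.
Qed.

Lemma key_sum (R : realType) n (lam : 'I_n.+1 -> R) (c : 'rV[R]_n) (c0 d s : R) : in_Lambda lam ->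
  \sum_j nu lam j * (dotv c (VN lam j) + c0 * (s * nu lam j) - d) = c0 * s * (n.+1)%:R.
Proof.
move=> hL.
under eq_bigr do rewrite mulrBr mulrDr.
rewrite sumrB big_split /= dotv_sum_nu // add0r -mulr_suml sum_nu // mul0r subr0.
under eq_bigr do rewrite mulrCA mulrA.
under eq_bigr do rewrite mulrCA !mulrA -(mulrA (s * c0)).
by rewrite -mulr_sumr sum_nu_sq // [s * c0]mulrC.
Qed.

Lemma lift_proj (R : realType) m n (p : 'I_m -> 'rV[R]_n) (h : 'I_m -> R) (w : 'I_m -> R) :
  \sum_i w i *: Defs.lift p h i = 0 -> \sum_i w i *: p i = 0.
Proof.
move=> H; apply/rowP => j.
have := congr1 (fun M : 'rV[R]_(n + 1) => M 0 (lshift 1 j)) H.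
rewrite /= summxE !mxE summxE.
under eq_bigr do rewrite mxE /Defs.lift row_mxEl.
move=> H2; rewrite -[RHS]H2; apply: eq_bigr => i _; by rewrite mxE.
Qed.

Lemma facet_conv (R : realType) n (lam : 'I_n.+1 -> R) (s : R) L : in_Lambda lam ->
  (s = 1 \/ s = -1) -> lower_facet (VN lam) (fun i => s * nu lam i) L ->
  exists2 S, S \in DeltaS lam s & same_hull (VN lam) S L.
Proof.
move=> hL hs [c [c0 [d [hc0 hge hLe [i hi] [S' /andP [sub /eqP card] _]]]]].
have hpm : pm1 lam by case: hL.
have hss := s_sq hs.
have hs0 := s_neq0 hs.
have eL : L = ~: [set i].
  apply/eqP; rewrite eqEcard; apply/andP; split.
    apply/subsetP => j hj; rewrite in_setC in_set1; apply/eqP => eji.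
    by move: hi; rewrite -eji hj.
  by rewrite cardsC1 card_ord /=; move: (subset_leq_card sub); rewrite card.
set Q := fun j => dotv c (VN lam j) + c0 * (s * nu lam j) - d.
have Q0 : forall j, j != i -> Q j = 0.
  move=> j hj; rewrite /Q; apply/eqP; rewrite subr_eq0; apply/eqP.
  by apply/hLe; rewrite eL in_setC in_set1.
have Qi : 0 <= Q i by rewrite /Q subr_ge0.
have hk := key_sum c c0 d s hL.
rewrite (bigD1 i) //= big1 ?addr0 in hk; last first.
  by move=> j hj; have := Q0 j hj; rewrite /Q => ->; rewrite mulr0.
have hN : 0 < (n.+1)%:R :> R by rewrite ltr0n.
have hk' : nu lam i * Q i = c0 * s * (n.+1)%:R by [].
case: (sgn_cases i hpm hs) => [h0|[hp|hm]].
- exfalso; move: hk'; rewrite h0 mul0r => /esym/eqP.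
  by rewrite !mulf_eq0 (negbTE hs0) (gt_eqF hc0) (gt_eqF hN).
- exists (~: [set i]); first by apply/mem_DeltaS; exists i.
  by rewrite eL.
- exfalso; move: hk'; rewrite hm => /(congr1 (fun z => s * z)).
  have e1 : s * (c0 * s * (n.+1)%:R) = c0 * (n.+1)%:R * (s * s) by ring.
  have e2 : s * (- s * Q i) = - (Q i * (s * s)) by ring.
  rewrite e1 e2 hss !mulr1 => hq.
  have : 0 < c0 * (n.+1)%:R by apply: mulr_gt0.
  by rewrite -hq oppr_gt0 ltNge Qi.
Qed.

Lemma dot_row_e (R : realType) n (phi : nat -> R) k :
  phi 0%N = 0 -> phi n.+1 = 0 -> (k <= n.+1)%N ->
  dotv (\row_(j < n) phi j.+1) (e R n k) = phi k.
Proof.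
move=> p0 pn hk; rewrite /dotv.
under eq_bigr do rewrite !mxE.
case: k hk => [|k] hk.
  by rewrite p0; apply: big1 => j _ /=; rewrite mulr0.
case: (ltnP k n) => hkn.
  rewrite (bigD1 (Ordinal hkn)) //= eqxx mulr1 big1 ?addr0 // => j hj.
  have : (k.+1 == j.+1) = false.
    by apply/negbTE; apply: contra hj => /eqP [hh]; apply/eqP/val_inj.
  by move=> ->; rewrite mulr0.
have -> : k = n by lia.
rewrite pn; apply: big1 => j _.
have : (n.+1 == j.+1) = false by apply/negbTE; have := ltn_ord j; lia.
by move=> ->; rewrite mulr0.
Qed.

Lemma dotvZ (R : realType) n (c : 'rV[R]_n) a v : dotv c (a *: v) = a * dotv c v.
Proof. rewrite /dotv mulr_sumr; apply: eq_bigr => j _; rewrite mxE; ring. Qed.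

Lemma dotvB (R : realType) n (c : 'rV[R]_n) u v : dotv c (u - v) = dotv c u - dotv c v.
Proof. rewrite /dotv -sumrB; apply: eq_bigr => j _; rewrite !mxE; ring. Qed.

Lemma dotv0 (R : realType) n (c : 'rV[R]_n) : dotv c 0 = 0.
Proof. rewrite /dotv; apply: big1 => j _; rewrite mxE; ring. Qed.

Lemma facet_fwd (R : realType) n (lam : 'I_n.+1 -> R) (s : R) a : in_Lambda lam ->
  (s = 1 \/ s = -1) -> nu lam a = s ->
  lower_facet (VN lam) (fun i => s * nu lam i) (~: [set a]).
Proof.
move=> hL hs ha.
have hpm : pm1 lam by case: hL.
have hss := s_sq hs.
have hs0 := s_neq0 hs.
have a0 : (0 < a)%N.
  case: (posnP a) => // h0; exfalso; move: hs0.
  by rewrite -ha (_ : a = ord0) ?nu0 ?eqxx //; apply: val_inj.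
set phi := fun k : nat => s * lam ord0 * (k%:R - (a <= k)%N%:R * (n.+1)%:R).
set c := \row_(j < n) phi j.+1.
have p0 : phi 0%N = 0.
  by rewrite /phi leqNgt a0 /= mul0r subr0 mulr0.
have pn : phi n.+1 = 0.
  rewrite /phi (_ : (a <= n.+1)%N = true) ?mul1r ?subrr ?mulr0 //; have := ltn_ord a; lia.
set Q := fun j => dotv c (VN lam j) + 1 * (s * nu lam j).
have Q0 : forall j, j != a -> Q j = 0.
  move=> j hj; rewrite /Q; case: (posnP j) => hj0.
    rewrite /VN hj0 eqxx dotv0 /nu hj0 eqxx; ring.
  have [j' ej] : exists j', (j : nat) = j'.+1 by exists j.-1; lia.
  rewrite /VN ej /=.
  have hj' : (j' < n.+1)%N by have := ltn_ord j; lia.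
  rewrite dotvZ dotvB !dot_row_e //; last by lia.
  have hle : (a <= j'.+1)%N = (a <= j')%N.
    rewrite leq_eqVlt ltnS.
    have -> : (a == j'.+1 :> nat) = false.
      by apply/negbTE; apply: contra hj => /eqP hh; apply/eqP/val_inj; rewrite /= ej hh.
    by [].
  rewrite /phi hle -natr1 nu_pos; last by lia.
  ring.
have Qa : Q a = (n.+1)%:R.
  have hk := key_sum c 1 0 s hL.
  rewrite (bigD1 a) //= big1 ?addr0 in hk; last first.
    by move=> j hj; have := Q0 j hj; rewrite /Q => ->; rewrite subr0 mulr0.
  rewrite subr0 ha in hk.
  rewrite /Q ha; have := congr1 (fun z => s * z) hk.
  rewrite mulrA hss mul1r => ->.
  by rewrite mul1r mulrA hss mul1r.
exists c, 1, 0; split.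
- exact: ltr01.
- move=> i; case: (eqVneq i a) => [->|hi].
    by rewrite -/(Q a) Qa ler0n.
  by rewrite -/(Q i) Q0.
- move=> i; rewrite in_setC in_set1 -/(Q i); split.
    by move=> hi; apply: Q0.
  case: (eqVneq i a) => [->|//].
  by rewrite Qa => /eqP; rewrite pnatr_eq0.
- by exists a; rewrite in_setC in_set1 eqxx.
- exists (~: [set a]); first by rewrite subxx cardsC1 card_ord eqxx.
  move=> w hw hsum hv; apply: (cell_indep hL _ hw hsum (lift_proj hv)).
  by rewrite -val_eqE /= -lt0n.
Qed.

Lemma regular_DeltaS (R : realType) n (lam : 'I_n.+1 -> R) (s : R) : in_Lambda lam ->
  (s = 1 \/ s = -1) -> regular_triangulation (VN lam) (DeltaS lam s).
Proof.
move=> hL hs; split; first by apply: tri_DeltaS => //; apply: exists_nu.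
exists (fun i => s * nu lam i); split.
  move=> S /mem_DeltaS [k [-> hk]]; exists (~: [set k]); split.
    exact: facet_fwd.
  by move=> x.
by move=> L hLf; apply: facet_conv.
Qed.

Theorem lemma5p3 (R : realType) (n : nat) (lam : 'I_n.+1 -> R) :
  ~~ odd n.+1 -> (4 <= n.+1)%N -> in_Lambda lam ->
  (forall T : {set {set 'I_n.+2}},
     is_triangulation (VN lam) T <-> T = Delta_plus lam \/ T = Delta_minus lam) /\
  Delta_plus lam <> Delta_minus lam /\
  regular_triangulation (VN lam) (Delta_plus lam) /\
  regular_triangulation (VN lam) (Delta_minus lam).
Proof.
move=> _ _ hL; rewrite (Delta_plus_eq hL) (Delta_minus_eq hL).
split; first by move=> T; exact: classify.
split; first exact: Delta_neq.
by split; apply: regular_DeltaS => //; [left|right].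
Qed.
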